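(* Let $\mathcal{F}=\langle\mathbb{A},(\mu_i)_{i\in\mathsf{Ag}}\rangle$ be an APE-structure and $\mathbb{E}=(E,(\sim_i),(P_i),\Phi,\mathsf{pre})$ a probabilistic event structure over $\mathbb{A}$. Then the maps $(\mu^{\mathbb{E}}_i)_{i\in\mathsf{Ag}}$ of the updated structure $\mathcal{F}^{\mathbb{E}}=(\mathbb{A}^{\mathbb{E}},(\mu^{\mathbb{E}}_i)_{i\in\mathsf{Ag}})$ are well-defined.
   Context: Fix a set $\mathsf{Ag}$ of agents. A monadic Heyting algebra is a Heyting algebra $\mathbb{L}$ with, for each $i\in\mathsf{Ag}$, monotone unary operations $\lozenge_i,\Box_i$ such that for all $a,b$: $a\leq\lozenge_i a$; $\Box_i a\leq a$; $\lozenge_i(a\vee b)\leq\lozenge_i a\vee\lozenge_i b$; $\Box_i(a\to b)\leq\Box_i a\to\Box_i b$; $\lozenge_i a\leq\Box_i\lozenge_i a$; $\lozenge_i\Box_i a\leq\Box_i a$; $\Box_i(a\to b)\leq\lozenge_i a\to\lozenge_i b$; $\lozenge_i\bot\leq\bot$; $\top\leq\Box_i\top$. An epistemic Heyting algebra is a finite monadic Heyting algebra with $\lozenge_i a\vee\neg\lozenge_i a=\top$ for all $i,a$. An element $c$ is $i$-minimal if $c\neq\bot$, $\lozenge_i c=c$, and whenever $d<c$ and $\lozenge_i d=d$ then $d=\bot$; $\mathsf{Min}_i(\cdot)$ is the set of $i$-minimal elements. A partial map $\mu:\mathbb{A}\to\mathbb{R}^+$ is an $i$-premeasure if: $\mathsf{dom}(\mu)=\mathsf{Min}_i(\mathbb{A}){\downarrow}$;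 $\mu$ is order-preserving; for $a\in\mathsf{Min}_i(\mathbb{A})$ and $b,c\leq a$, $\mu(b\vee c)=\mu(b)+\mu(c)-\mu(b\wedge c)$; $\mu(\bot)=0$ if $\mathsf{dom}(\mu)\neq\varnothing$. It is an $i$-measure if also: for $a\in\mathsf{Min}_i(\mathbb{A})$ and $b<c\leq a$, $\mu(b)<\mu(c)$; and $\mu(a)=1$ for $a\in\mathsf{Min}_i(\mathbb{A})$. An APE-structure is $\langle\mathbb{A},(\mu_i)\rangle$ with $\mathbb{A}$ an epistemic Heyting algebra and each $\mu_i$ an $i$-measure. A pre-ordered multiset on $X$ is a multiset in which the copies $x_1,\dots,x_n$ of an element carry the linear order $x_1\prec\cdots\prec x_n$. A probabilistic event structure over $\mathbb{A}$ is $(E,(\sim_i),(P_i),\Phi,\mathsf{pre})$: $E$ non-empty finite; $\sim_i$ equivalence relations on $E$; $P_i:E\to\,]0,1]$ with $\sum\{P_i(e')\mid e'\sim_i e\}=1$; $\Phi$ a finite pre-ordered multiset on $\mathbb{A}$ such that any $a,b\in\Phi$ arising from distinct elements satisfy $a\wedge b=\bot$ or $a<b$ or $b<a$; $\mathsf{pre}(\bullet\mid a)$ a probability distribution on $E$ for each $a\in\Phi$; and if $\mathsf{pre}(e\mid a)=0$ then $\mathsf{pre}(e\mid b)=0$ for $b\in\Phi$ with $a<b$ (distinct elements) or $a\prec b$ (copies). For $a\in\Phi$: $\mathrm{mb}(a)$ is the set of maximal elements of $\Phi\cap({\downarrow}a\setminus\{a\})$, and $\mu^a_i(x):=\mu_i(x\wedge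 a)-\sum_{b\in\mathrm{mb}(a)}\mu_i(x\wedge b)$ for $x\in\mathsf{Min}_i(\mathbb{A}){\downarrow}$. Intermediate algebra $\mathbb{A}'=\prod_{\mathbb{E}}\mathbb{A}$: all maps $f:E\to\mathbb{A}$ with pointwise Heyting operations, $(\lozenge'_i f)(e)=\bigvee\{\lozenge_i f(e')\mid e'\sim_i e\}$, $(\Box'_i f)(e)=\bigwedge\{\Box_i f(e')\mid e'\sim_i e\}$; and $\mu'_i:\mathsf{Min}_i(\mathbb{A}'){\downarrow}\to\mathbb{R}^+$, $\mu'_i(f)=\sum_{e\in E}\sum_{a\in\Phi}P_i(e)\mu^a_i(f(e))\mathsf{pre}(e\mid a)$. Define $\overline{\mathsf{pre}}\in\mathbb{A}'$ by $\overline{\mathsf{pre}}(e)=\bigvee\{a\in\Phi\mid\mathsf{pre}(e\mid a)\neq0\}$. For an epistemic Heyting algebra $\mathbb{B}$ and $c\in\mathbb{B}$, the pseudo-quotient $\mathbb{B}^c$ has carrier the quotient Heyting algebra by $x\cong_c y\iff x\wedge c=y\wedge c$ (classes $[x]$), with $\lozenge^c_i[x]=[\lozenge_i(x\wedge c)]$, $\Box^c_i[x]=[\Box_i(c\to x)]$. Set $\mathbb{A}^{\mathbb{E}}:=(\mathbb{A}')^{\overline{\mathsf{pre}}}$. The updated structure is $\mathcal{F}^{\mathbb{E}}=(\mathbb{A}^{\mathbb{E}},(\mu^{\mathbb{E}}_i))$ where $\mu^{\mathbb{E}}_i:\mathsf{Min}_i(\mathbb{A}^{\mathbb{E}}){\downarrow}\to[0,1]$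 is given by $\mu^{\mathbb{E}}_i([g])=0$ if $[g]=\bot$ and otherwise $\mu^{\mathbb{E}}_i([g])=\mu'_i(g)/\mu'_i(f)$, where $[f]$ is the only element of $\mathsf{Min}_i(\mathbb{A}^{\mathbb{E}})$ with $[g]\leq[f]$. Well-definedness means: this $[f]$ is unique, the denominator is nonzero, and the value does not depend on the chosen representatives. *)

(* Defs.v *)
(* Finite (epistemic) Heyting algebras are modelled as a
   finite bounded distributive lattice [L : finTBDistrLatticeType d] together
   with a Heyting implication [imp] (characterised by residuation) and
   agent-indexed operators [dia], [box]. *)
From mathcomp Require Import all_boot all_order all_algebra.
Set Implicit Arguments. Unset Strict Implicit. Unset Printing Implicit Defensive.
Import Order.TTheory GRing.Theory Num.Theory.

Section APE.

Variable Ag : Type.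
Variables (disp : Order.disp_t) (L : finTBDistrLatticeType disp).
Local Open Scope order_scope.

Definition heyting_imp (imp : L -> L -> L) : Prop :=
  forall a b c : L, (a `&` b <= c) = (a <= imp b c).

Definition monadic_ops (imp : L -> L -> L) (dia box : Ag -> L -> L) : Prop :=
  forall i : Ag,
  [/\ {homo dia i : x y / x <= y}, {homo box i : x y / x <= y},
      (forall a, a <= dia i a), (forall a, box i a <= a) &
      (forall a b, dia i (a `|` b) <= dia i a `|` dia i b)] /\
  [/\ (forall a b, box i (imp a b) <= imp (box i a) (box i b)),
      (forall a, dia i a <= box i (dia i a)),
      (forall a, dia i (box i a) <= box i a),
      (forall a b, box i (imp a b) <= imp (dia i a) (dia i b)) &
      (dia i \bot <= \bot /\ \top <= box i \top)].

Definition epistemic_HA (imp : L -> L -> L) (dia box : Ag -> L -> L) : Prop :=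
  [/\ heyting_imp imp, monadic_ops imp dia box &
      forall i a, dia i a `|` imp (dia i a) \bot = \top].

Definition is_minA (dia : Ag -> L -> L) (i : Ag) (c : L) : Prop :=
  [/\ c != \bot, dia i c = c &
      forall d, d < c -> dia i d = d -> d = \bot].

Definition in_domA (dia : Ag -> L -> L) (i : Ag) (x : L) : Prop :=
  exists2 c, is_minA dia i c & x <= c.

Variable R : realFieldType.

(* i-measure (i-premeasure + the extra conditions), given as a total map
   whose values are only constrained on its domain Min_i(A)↓. *)
Definition is_measure (dia : Ag -> L -> L) (i : Ag) (m : L -> R) : Prop :=
  [/\ (forall x, in_domA dia i x -> (0 <= m x)%R) &
      (forall x y, in_domA dia i x -> in_domA dia i y -> x <= y ->
                   (m x <= m y)%R)] /\
  [/\
      (forall a b c, is_minA dia i a -> b <= a -> c <= a ->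
         m (b `|` c) = (m b + m c - m (b `&` c))%R),
      ((exists x, in_domA dia i x) -> m \bot = 0%R),
      (forall a b c, is_minA dia i a -> b < c -> c <= a -> (m b < m c)%R) &
      (forall a, is_minA dia i a -> m a = 1%R)].

Definition APE_structure (imp : L -> L -> L) (dia box : Ag -> L -> L)
    (mu : Ag -> L -> R) : Prop :=
  epistemic_HA imp dia box /\ forall i, is_measure dia i (mu i).

(* The finite pre-ordered multiset Phi is a finite sequence [phi : 'I_n -> L];
   copies of the same element are ordered by their position. *)

Variable E : finType.

Definition prob_event_structure (sim : Ag -> rel E) (P : Ag -> E -> R)
    (n : nat) (phi : 'I_n -> L) (pre : 'I_n -> E -> R) : Prop :=
  [/\ (0 < #|E|)%N,
      (forall i, equivalence_rel (sim i)),
      (forall i e, (0 < P i e)%R /\ (P i e <= 1)%R) &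
      (forall i e, (\sum_(e' | sim i e e') P i e')%R = 1%R)] /\
  [/\
      (forall j k, phi j != phi k ->
         (phi j `&` phi k = \bot \/ (phi j < phi k) \/ (phi k < phi j))),
      (forall k e, (0 <= pre k e)%R),
      (forall k, (\sum_(e : E) pre k e)%R = 1%R) &
      (forall j k e, pre j e = 0%R ->
         (phi j < phi k \/ (phi j = phi k /\ (j < k)%N)) -> pre k e = 0%R)].

Section Update.
Variables (dia : Ag -> L -> L) (mu : Ag -> L -> R) (sim : Ag -> rel E)
  (P : Ag -> E -> R) (n : nat) (phi : 'I_n -> L) (pre : 'I_n -> E -> R).

Definition mb (a : L) : {set L} :=
  [set b : L | [&& [exists k, phi k == b], b < a &
                  ~~ [exists k, (b < phi k) && (phi k < a)]]].

Definition mu_a (i : Ag) (a x : L) : R :=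
  (mu i (x `&` a) - \sum_(b in mb a) mu i (x `&` b))%R.

(* the intermediate algebra A' = prod_E A : maps E -> L, pointwise *)
Definition leF (f g : E -> L) : Prop := forall e, f e <= g e.
Definition eqF (f g : E -> L) : Prop := forall e, f e = g e.
Definition ltF (f g : E -> L) : Prop := leF f g /\ ~ eqF f g.
Definition meetF (f g : E -> L) : E -> L := fun e => f e `&` g e.
Definition botF : E -> L := fun _ => \bot.
Definition diaF (i : Ag) (f : E -> L) : E -> L :=
  fun e => \join_(e' | sim i e e') dia i (f e').

Definition is_minF (i : Ag) (f : E -> L) : Prop :=
  [/\ ~ eqF f botF, eqF (diaF i f) f &
      forall d, ltF d f -> eqF (diaF i d) d -> eqF d botF].

Definition in_domF (i : Ag) (g : E -> L) : Prop :=
  exists2 f, is_minF i f & leF g f.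

Definition mu' (i : Ag) (f : E -> L) : R :=
  (\sum_(e : E) \sum_(k : 'I_n) P i e * mu_a i (phi k) (f e) * pre k e)%R.

Definition preb : E -> L := fun e => \join_(k | pre k e != 0%R) phi k.

(* the pseudo-quotient A^E = (A')^preb, described on representatives:
   [x] = [y] iff x /\ preb = y /\ preb ; [x] <= [y] iff x /\ preb <= y /\ preb;
   dia^c_i [x] = [dia'_i (x /\ preb)]. *)
Definition eqQ (f g : E -> L) : Prop := eqF (meetF f preb) (meetF g preb).
Definition leQ (f g : E -> L) : Prop := leF (meetF f preb) (meetF g preb).
Definition ltQ (f g : E -> L) : Prop := leQ f g /\ ~ eqQ f g.
Definition diaQ (i : Ag) (f : E -> L) : E -> L := diaF i (meetF f preb).

Definition is_minQ (i : Ag) (f : E -> L) : Prop :=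
  [/\ ~ eqQ f botF, eqQ (diaQ i f) f &
      forall d, ltQ d f -> eqQ (diaQ i d) d -> eqQ d botF].

Definition in_domQ (i : Ag) (g : E -> L) : Prop :=
  exists2 f, is_minQ i f & leQ g f.

(* Well-definedness of mu^E_i([g]) = mu'_i(g) / mu'_i(f) for a non-bottom
   [g] in Min_i(A^E)↓ *)
Definition muE_well_defined (i : Ag) : Prop :=
  forall g : E -> L, in_domQ i g -> ~ eqQ g botF ->
  exists f : E -> L,
  [/\ is_minQ i f, leQ g f &
      (forall f', is_minQ i f' -> leQ g f' -> eqQ f' f)] /\
  [/\
      (exists2 g0, eqQ g0 g & in_domF i g0),
      (exists2 f0, eqQ f0 f & in_domF i f0),
      (forall f0, eqQ f0 f -> in_domF i f0 -> mu' i f0 != 0%R) &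
      (forall g1 g2 f1 f2, eqQ g1 g -> eqQ g2 g -> eqQ f1 f -> eqQ f2 f ->
         in_domF i g1 -> in_domF i g2 -> in_domF i f1 -> in_domF i f2 ->
         (mu' i g1 / mu' i f1 = mu' i g2 / mu' i f2)%R)].

End Update.
End APE.

(* Main.v *)
Require Import Defs.
From mathcomp Require Import all_boot all_order all_algebra.
From Stdlib Require Import Classical.
Set Implicit Arguments. Unset Strict Implicit. Unset Printing Implicit Defensive.
Import Order.TTheory GRing.Theory Num.Theory.
From mathcomp Require Import lra.
Local Open Scope order_scope.

Lemma wf_min disp (L : finPOrderType disp) (Q : L -> Prop) y :
  Q y -> exists z, Q z /\ forall w, w < z -> ~ Q w.
Proof.
have: forall N y, (#|[pred w : L | (w < y)%O]| <= N)%N -> Q y ->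
   exists z, Q z /\ forall w, w < z -> ~ Q w; last by move=> H; apply: H.
elim=> [|N IH] y0 Hc Qy.
  exists y0; split=> // w wy; move: Hc; rewrite leqn0 => /eqP/card0_eq/(_ w).
  by rewrite inE wy.
case: (classic (exists w, w < y0 /\ Q w)) => [[w [wy Qw]]|H].
  apply: (IH w) => //.
  have: (#|[pred v : L | (v < w)%O]| < #|[pred v : L | (v < y0)%O]|)%N.
    apply: proper_card; apply/properP; split.
      by apply/subsetP=> v; rewrite !inE => vw; apply: lt_trans vw wy.
    by exists w; rewrite !inE ?ltxx.
  move=> H; rewrite -ltnS; exact: leq_trans H Hc.
by exists y0; split=> // w wy Qw; apply: H; exists w.
Qed.

Lemma exists_min Ag disp (L : finTBDistrLatticeType disp) imp dia box (i : Ag) :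
  epistemic_HA imp dia box -> forall x y : L, dia i y = y -> y `&` x != \bot ->
  exists c, is_minA dia i c /\ c <= y /\ c `&` x != \bot.
Proof.
case=> Himp Hmon Hepi; rewrite /heyting_imp in Himp.
case: (Hmon i) => [[dmono bmono dinc bdec _] [_ dbd dbb dimp [d0 _]]].
move=> x y0 fy0 nz.
have [y [[fy [yle ynz]] ymin]] := wf_min
  (Q := fun y => dia i y = y /\ y <= y0 /\ y `&` x != \bot) (conj fy0 (conj (lexx _) nz)).
exists y; split; last by split.
split => //.
  by apply/negP => /eqP y0'; rewrite y0' meet0x eqxx in ynz.
move=> d dy fd; apply/eqP; apply/negPn/negP => dnz.
case: (eqVneq (d `&` x) \bot) => dx; last first.
  by apply: (ymin d dy); split=> //; split=> //; exact: le_trans (ltW dy) yle.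
set nd := imp d \bot.
have dnd : d `&` nd <= \bot by rewrite meetC /nd Himp.
have hd: dia i nd <= nd.
  rewrite /nd -Himp -/nd.
  have h1 : d <= box i (imp nd \bot).
    have dd : d <= imp nd \bot by rewrite -Himp.
    have bd : d <= box i d by have := dbd d; rewrite fd.
    exact: le_trans bd (bmono _ _ dd).
  have h2 := le_trans h1 (dimp nd \bot).
  rewrite -Himp in h2; rewrite meetC; apply: le_trans h2 _; exact: d0.
set y' := y `&` nd.
have fy' : dia i y' = y'.
  apply/le_anti; rewrite dinc andbT lexI; apply/andP; split.
    by apply: le_trans (dmono _ _ (leIl y nd)) _; rewrite fy.
  by apply: le_trans hd; apply: dmono; exact: leIr.
have ex : d `|` nd = \top by have := Hepi i d; rewrite fd.
have y'x : y' `&` x = y `&` x.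
  rewrite -[y `&` x]meetx1 -ex meetUr.
  have -> : y `&` x `&` d = \bot.
    by apply/eqP; rewrite -lex0 -dx lexI leIr /=; apply: le_trans (leIl _ _) (leIr _ _).
  by rewrite join0x /y' -!meetA [nd `&` x]meetC.
apply: (ymin y').
  rewrite lt_neqAle leIl andbT; apply/negP => /eqP yy.
  have : d <= nd by apply: le_trans (ltW dy) _; rewrite -yy leIr.
  move=> dn; move: dnd; rewrite (meet_l dn) lex0 => /eqP; move/eqP: dnz; done.
split=> //; split; first by apply: le_trans (leIl _ _) yle.
by rewrite y'x.
Qed.

Definition cls (disp : Order.disp_t) (L : finTBDistrLatticeType disp) (E : finType)
  (r : rel E) (e : E) (c : L) : E -> L := fun e' => if r e e' then c else \bot.

Lemma eq_facts (E : finType) (r : rel E) : equivalence_rel r ->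
  [/\ forall x, r x x, forall x y, r x y -> r y x & forall x y z, r x y -> r y z -> r x z].
Proof.
move=> H; split.
- by move=> x; case: (H x x x).
- by move=> x y rxy; case: (H x y x) => rxx /(_ rxy) <-.
- by move=> x y z rxy; case: (H x y z) => _ /(_ rxy) ->.
Qed.

Lemma cls_fixed Ag disp (L : finTBDistrLatticeType disp) (E : finType) (dia : Ag -> L -> L)
  (sim : Ag -> rel E) i e c :
  equivalence_rel (sim i) -> dia i \bot = \bot -> dia i c = c ->
  eqF (diaF dia sim i (cls (sim i) e c)) (cls (sim i) e c).
Proof.
move=> /eq_facts [rf sy tr] d0 dc e'; rewrite /diaF /cls.
case: ifP => ee'.
  apply/le_anti; apply/andP; split.
    by apply/joinsP => e'' _; case: ifP; rewrite ?dc ?d0 ?le0x.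
  by apply: (joins_min (j := e)); [exact: sy | rewrite rf dc].
apply/le_anti; rewrite le0x andbT; apply/joinsP => e'' se'e''.
case: ifP => ee''; last by rewrite d0.
by rewrite (tr _ _ _ ee'' (sy _ _ se'e'')) in ee'.
Qed.

Lemma dia_facts Ag disp (L : finTBDistrLatticeType disp) imp (dia box : Ag -> L -> L) i :
  epistemic_HA imp dia box ->
  [/\ {homo dia i : x y / x <= y}, forall a, a <= dia i a, dia i \bot = \bot &
      forall a, dia i (dia i a) = dia i a].
Proof.
case=> _ Hmon _.
case: (Hmon i) => [[dmono bmono dinc bdec _] [_ dbd dbb dimp [d0 _]]].
split => //; first by apply/le_anti; rewrite d0 le0x.
move=> a; apply/le_anti; rewrite dinc andbT.
apply: le_trans (dmono _ _ (dbd a)) _.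
exact: le_trans (dbb _) (bdec _).
Qed.

Lemma dia_fixF Ag disp (L : finTBDistrLatticeType disp) (E : finType) (dia : Ag -> L -> L)
  (sim : Ag -> rel E) i (d : E -> L) e :
  equivalence_rel (sim i) -> (forall a, a <= dia i a) -> eqF (diaF dia sim i d) d ->
  dia i (d e) = d e.
Proof.
move=> /eq_facts [rf sy tr] dinc fd; apply/le_anti; rewrite dinc andbT.
by rewrite -{2}(fd e) /diaF; apply: (joins_sup (j := e)); exact: rf.
Qed.

Lemma dia_fixF_le Ag disp (L : finTBDistrLatticeType disp) (E : finType) (dia : Ag -> L -> L)
  (sim : Ag -> rel E) i (d : E -> L) e e' :
  equivalence_rel (sim i) -> eqF (diaF dia sim i d) d -> sim i e e' ->
  dia i (d e) <= d e'.
Proof.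
move=> /eq_facts [rf sy tr] fd ee'.
by rewrite -(fd e') /diaF; apply: (joins_sup (j := e)); exact: sy.
Qed.

Lemma cls_min Ag disp (L : finTBDistrLatticeType disp) imp (dia box : Ag -> L -> L)
  (E : finType) (sim : Ag -> rel E) i e c :
  epistemic_HA imp dia box -> equivalence_rel (sim i) -> is_minA dia i c ->
  is_minF dia sim i (cls (sim i) e c).
Proof.
move=> HA Heq [cnz dc cmin].
have [dmono dinc d0 didem] := dia_facts i HA.
have [rf sy tr] := eq_facts Heq.
split; first by move/(_ e); rewrite /cls rf /botF; apply/eqP.
  exact: cls_fixed.
move=> d [dle dne] fd e1; rewrite /botF; case: (eqVneq (d e1) \bot) => // d1nz.
exfalso; apply: dne => e'.
have fde1 := dia_fixF e1 Heq dinc fd.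
have ee1 : sim i e e1.
  by apply: contraTT (dle e1) => ne; rewrite /cls (negbTE ne) lex0.
have de1 : d e1 = c.
  have le1 : d e1 <= c by move: (dle e1); rewrite /cls ee1.
  apply/eqP; apply/negPn/negP => ne.
  by move/eqP: d1nz; apply; apply: cmin => //; rewrite lt_neqAle ne.
rewrite /cls; case: ifP => ee'.
  have h := dia_fixF_le (e:=e1) (e':=e') Heq fd (tr _ _ _ (sy _ _ ee1) ee').
  rewrite fde1 de1 in h; apply/le_anti; rewrite h andbT.
  by move: (dle e'); rewrite /cls ee'.
by apply/le_anti; rewrite le0x andbT; move: (dle e'); rewrite /cls ee'.
Qed.

Lemma minF_point Ag disp (L : finTBDistrLatticeType disp) imp (dia box : Ag -> L -> L)
  (E : finType) (sim : Ag -> rel E) i (M : E -> L) e :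
  epistemic_HA imp dia box -> equivalence_rel (sim i) -> is_minF dia sim i M ->
  M e != \bot -> is_minA dia i (M e).
Proof.
move=> HA Heq [Mnz fM Mmin] Me.
have [dmono dinc d0 didem] := dia_facts i HA.
have [rf sy tr] := eq_facts Heq.
have fMe := dia_fixF e Heq dinc fM.
have Mee : M e `&` M e != \bot by rewrite meetxx.
have [c [cmin [cle cnz]]] := exists_min HA fMe Mee.
have clsle : leF (cls (sim i) e c) M.
  move=> e'; rewrite /cls; case: ifP => ee'; last exact: le0x.
  apply: le_trans cle _; rewrite -{1}fMe; exact: dia_fixF_le Heq fM ee'.
have dc : dia i c = c by case: cmin.
case: (classic (eqF (cls (sim i) e c) M)) => H.
  by rewrite -(H e) /cls rf.
have := Mmin _ (conj clsle H) (cls_fixed e Heq d0 dc).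
move/(_ e); rewrite /cls rf /botF => c0.
by case: cmin => /eqP; rewrite c0.
Qed.

Lemma minF_dom Ag disp (L : finTBDistrLatticeType disp) imp (dia box : Ag -> L -> L)
  (E : finType) (sim : Ag -> rel E) i (M : E -> L) e :
  epistemic_HA imp dia box -> equivalence_rel (sim i) -> is_minF dia sim i M ->
  in_domA dia i (M e).
Proof.
move=> HA Heq HM.
case: (eqVneq (M e) \bot) => Me; last by exists (M e) => //; exact: minF_point HA Heq HM Me.
case: (classic (exists e1, M e1 != \bot)) => [[e1 H1]|H].
  by exists (M e1); [exact: minF_point HA Heq HM H1 | rewrite Me le0x].
case: HM => Mnz _ _; exfalso; apply: Mnz => e1; rewrite /botF.
by apply/eqP; apply/negPn/negP => ne; apply: H; exists e1.
Qed.

Lemma meet_joins disp (L : finTBDistrLatticeType disp) I (r : seq I) (P : pred I) (F : I -> L) x :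
  x `&` \join_(i <- r | P i) F i = \join_(i <- r | P i) (x `&` F i).
Proof. exact: (big_morph (fun y => x `&` y) (meetUr x) (meetx0 x)). Qed.

Lemma meas_bot Ag disp (L : finTBDistrLatticeType disp) (R : realFieldType) dia (i : Ag)
  (m : L -> R) c : is_measure dia i m -> is_minA dia i c -> m \bot = 0%R.
Proof. by case=> _ [_ mbot _ _] cm; apply: mbot; exists \bot; exists c => //; exact: le0x. Qed.

Lemma sum_disj Ag disp (L : finTBDistrLatticeType disp) (R : realFieldType) dia (i : Ag)
  (m : L -> R) c x (s : seq L) :
  is_measure dia i m -> is_minA dia i c -> x <= c -> uniq s ->
  {in s &, forall b b', b != b' -> b `&` b' = \bot} ->
  (\sum_(b <- s) m (x `&` b))%R = m (x `&` \join_(b <- s) b).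
Proof.
move=> Hm cm xc; have m0 := meas_bot Hm cm.
case: Hm => [[mnn mmono] [madd mbot mstr m1]].
elim: s => [|b s IH] /= us hd; first by rewrite !big_nil meetx0 m0.
move/andP: us => [bs us]; rewrite !big_cons.
rewrite IH //; last first.
  by move=> u v us' vs'; apply: hd; rewrite inE ?us' ?vs' orbT.
rewrite meetUr (madd c) //; last 2 first.
- exact: le_trans (leIl _ _) xc.
- exact: le_trans (leIl _ _) xc.
suff -> : x `&` b `&` (x `&` \join_(j <- s) j) = \bot by rewrite m0 subr0.
apply/eqP; rewrite -lex0; apply: le_trans (_ : b `&` \join_(j <- s) j <= _).
  by rewrite lexI; apply/andP; split; [apply: le_trans (leIl _ _) (leIr _ _)|
     apply: le_trans (leIr _ _) (leIr _ _)].
rewrite meet_joins big1_seq ?lexx // => b' /= b's.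
apply: hd; rewrite ?inE ?eqxx ?b's ?orbT //.
by apply/negP => /eqP eb; rewrite eb b's in bs.
Qed.

Lemma mb_P disp (L : finTBDistrLatticeType disp) n (phi : 'I_n -> L) a b :
  b \in mb phi a ->
  [/\ exists k, phi k = b, b < a & forall k, b < phi k -> phi k < a -> False].
Proof.
rewrite inE => /and3P [/existsP [j /eqP bj] ba nb]; split => //; first by exists j.
by move=> k h1 h2; move/negP: nb; apply; apply/existsP; exists k; rewrite h1 h2.
Qed.

Lemma mb_disj disp (L : finTBDistrLatticeType disp) n (phi : 'I_n -> L) a :
  (forall j k, phi j != phi k ->
         (phi j `&` phi k = \bot \/ (phi j < phi k) \/ (phi k < phi j))) ->
  {in enum (mb phi a) &, forall b b', b != b' -> b `&` b' = \bot}.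
Proof.
move=> Hphi b b'; rewrite !mem_enum => /mb_P [[j bj] ba nb] /mb_P [[k bk] ba' nb'] ne.
have : phi j != phi k by rewrite bj bk.
move/Hphi; rewrite bj bk; case=> [//|[h|h]]; exfalso.
  by apply: (nb k); rewrite bk.
by apply: (nb' j); rewrite bj.
Qed.

Lemma mu_a_ge0 Ag disp (L : finTBDistrLatticeType disp) (R : realFieldType) dia
  (mu : Ag -> L -> R) n (phi : 'I_n -> L) i a x :
  is_measure dia i (mu i) ->
  (forall j k, phi j != phi k ->
         (phi j `&` phi k = \bot \/ (phi j < phi k) \/ (phi k < phi j))) ->
  in_domA dia i x -> (0 <= mu_a mu phi i a x)%R.
Proof.
move=> Hm Hphi [c cm xc].
rewrite /mu_a -big_enum (sum_disj Hm cm xc (enum_uniq _) (mb_disj (a:=a) Hphi)) subr_ge0.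
case: Hm => [[_ mmono] _]; apply: mmono.
- by exists c => //; exact: le_trans (leIl _ _) xc.
- by exists c => //; exact: le_trans (leIl _ _) xc.
rewrite lexI leIl /=; apply: le_trans (leIr _ _) _.
by apply/joinsP_seq => b; rewrite mem_enum => /mb_P [_ /ltW ba _].
Qed.

Lemma mu_a_congr Ag disp (L : finTBDistrLatticeType disp) (R : realFieldType)
  (mu : Ag -> L -> R) n (phi : 'I_n -> L) i a x y :
  x `&` a = y `&` a -> mu_a mu phi i a x = mu_a mu phi i a y.
Proof.
move=> H; rewrite /mu_a H; congr (_ - _)%R; apply: eq_bigr => b /mb_P [_ /ltW ba _].
by rewrite -(meet_r ba) !meetA H.
Qed.

Lemma mu'_congr Ag disp (L : finTBDistrLatticeType disp) (R : realFieldType) (E : finType)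
  (mu : Ag -> L -> R) (P : Ag -> E -> R) n (phi : 'I_n -> L) (pre : 'I_n -> E -> R) i g1 g2 :
  eqQ phi pre g1 g2 -> mu' mu P phi pre i g1 = mu' mu P phi pre i g2.
Proof.
move=> H; rewrite /mu'; apply: eq_bigr => e _; apply: eq_bigr => k _.
case: (eqVneq (pre k e) 0%R) => [->|pk]; first by rewrite !mulr0.
congr (_ * _ * _)%R; apply: mu_a_congr.
have kp : phi k <= preb phi pre e by rewrite /preb; apply: (joins_sup (j:=k)).
have He : g1 e `&` preb phi pre e = g2 e `&` preb phi pre e := H e.
by rewrite -(meet_r kp) !meetA He.
Qed.

Lemma mu'_pos Ag disp (L : finTBDistrLatticeType disp) (R : realFieldType) (E : finType)
  imp (dia box : Ag -> L -> L)
  (mu : Ag -> L -> R) (sim : Ag -> rel E) (P : Ag -> E -> R) n (phi : 'I_n -> L)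
  (pre : 'I_n -> E -> R) i f0 :
  APE_structure imp dia box mu -> prob_event_structure sim P phi pre ->
  (forall e, in_domA dia i (f0 e)) -> (exists e, f0 e `&` preb phi pre e != \bot) ->
  (0 < mu' mu P phi pre i f0)%R.
Proof.
move=> [HA Hms] [[Enz Heqs Pb Psum] [Hphi pnn psum pcond]] Hdom [e0 ne0].
have Hm := Hms i.
set x := f0 e0.
have [k1 [pk1 xk1]] : exists k, pre k e0 != 0%R /\ x `&` phi k != \bot.
  case: (classic (exists k, pre k e0 != 0%R /\ x `&` phi k != \bot)) => // H.
  exfalso; move: ne0; rewrite /preb meet_joins big1 ?eqxx // => k pk.
  by apply/eqP; apply/negPn/negP => h; apply: H; exists k.
have [y [[k0 [yk0 [pk0 xk0]]] ymin]] := wf_min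
  (Q := fun y => exists k, phi k = y /\ pre k e0 != 0%R /\ x `&` y != \bot)
  (ex_intro _ k1 (conj erefl (conj pk1 xk1))).
subst y.
have [c cm xc] := Hdom e0.
have m0 := meas_bot Hm cm.
have pos : (0 < mu_a mu phi i (phi k0) x)%R.
  rewrite /mu_a big1 ?subr0; last first.
    move=> b /mb_P [[j bj] ba _].
    have pj : pre j e0 != 0%R.
      apply/eqP => pj0; move/eqP: pk0; apply; apply: (pcond j k0 e0 pj0); left; by rewrite bj.
    case: (eqVneq (x `&` b) \bot) => [->|nz]; first exact: m0.
    by exfalso; apply: (ymin b ba); exists j; rewrite bj.
  rewrite -m0; case: Hm => _ [_ _ mstr _]; apply: (mstr c) => //.
    by rewrite lt0x.
  exact: le_trans (leIl _ _) xc.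
have term_ge0 : forall e k, (0 <= P i e * mu_a mu phi i (phi k) (f0 e) * pre k e)%R.
  move=> e k; apply: mulr_ge0; last exact: pnn.
  apply: mulr_ge0; first by case: (Pb i e) => /ltW.
  exact: mu_a_ge0 Hm Hphi (Hdom e).
have tpos : (0 < P i e0 * mu_a mu phi i (phi k0) x * pre k0 e0)%R.
  apply: mulr_gt0; first apply: mulr_gt0 => //; first by case: (Pb i e0).
  by rewrite lt0r pk0 pnn.
rewrite /mu' (bigD1 e0) //= (bigD1 k0) //=.
have s1 : (0 <= \sum_(k < n | k != k0) P i e0 * mu_a mu phi i (phi k) (f0 e0) * pre k e0)%R.
  by apply: sumr_ge0 => k _.
have s2 : (0 <= \sum_(e | e != e0) \sum_(k < n) P i e * mu_a mu phi i (phi k) (f0 e) * pre k e)%R.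
  by apply: sumr_ge0 => e _; apply: sumr_ge0 => k _.
move: tpos; rewrite /x => tpos.
lra.
Qed.

Lemma fixQ Ag disp (L : finTBDistrLatticeType disp) (R : realFieldType) (E : finType)
  (dia : Ag -> L -> L) (sim : Ag -> rel E) n (phi : 'I_n -> L) (pre : 'I_n -> E -> R) i h :
  equivalence_rel (sim i) -> (forall a, a <= dia i a) ->
  (forall e, diaF dia sim i (meetF h (preb phi pre)) e `&` preb phi pre e
             <= h e `&` preb phi pre e) ->
  eqQ phi pre (diaQ dia sim phi pre i h) h.
Proof.
move=> /eq_facts [rf _ _] dinc H e; move: (H e); rewrite /meetF /diaQ /diaF => He.
apply/le_anti; rewrite He /= lexI leIr andbT.
apply: le_trans (dinc _) _; apply: (joins_sup (j:=e)); exact: rf.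
Qed.

Lemma diaF_mono Ag disp (L : finTBDistrLatticeType disp) (E : finType)
  (dia : Ag -> L -> L) (sim : Ag -> rel E) i a b :
  {homo dia i : x y / x <= y} -> leF a b -> leF (diaF dia sim i a) (diaF dia sim i b).
Proof.
move=> dmono ab e; rewrite /diaF; apply/joinsP => e' se'.
by apply: (joins_min (j := e')) => //; apply: dmono; exact: ab.
Qed.

Lemma minQ_eq Ag disp (L : finTBDistrLatticeType disp) (R : realFieldType) (E : finType)
  (dia : Ag -> L -> L) (sim : Ag -> rel E) n (phi : 'I_n -> L) (pre : 'I_n -> E -> R) i f h :
  is_minQ dia sim phi pre i f -> leQ phi pre h f ->
  eqQ phi pre (diaQ dia sim phi pre i h) h -> ~ eqQ phi pre h (@botF _ L E) ->
  eqQ phi pre h f.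
Proof.
move=> [_ _ fmin] hf fh nb.
case: (classic (eqQ phi pre h f)) => // ne.
by exfalso; apply: nb; apply: fmin.
Qed.

Lemma nbotQ disp (L : finTBDistrLatticeType disp) (R : realFieldType) (E : finType)
  n (phi : 'I_n -> L) (pre : 'I_n -> E -> R) h :
  ~ eqQ phi pre h (@botF _ L E) -> exists e, h e `&` preb phi pre e != \bot.
Proof.
move=> H; case: (classic (exists e, h e `&` preb phi pre e != \bot)) => // H2.
exfalso; apply: H => e; rewrite /meetF /botF meet0x.
by apply/eqP; apply/negPn/negP => h'; apply: H2; exists e.
Qed.

Theorem lemma6 (Ag : Type) (disp : Order.disp_t) (L : finTBDistrLatticeType disp)
  (imp : L -> L -> L) (dia box : Ag -> L -> L)
  (R : realFieldType) (mu : Ag -> L -> R)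
  (E : finType) (sim : Ag -> rel E) (P : Ag -> E -> R)
  (n : nat) (phi : 'I_n -> L) (pre : 'I_n -> E -> R) :
  APE_structure imp dia box mu ->
  prob_event_structure sim P phi pre ->
  forall i : Ag, muE_well_defined dia mu sim P phi pre i.
Proof.
move=> HAPE HPES i g [f fmin gf] gnz.
have [HA Hms] := HAPE.
have [[Enz Heqs Pb Psum] [Hphi pnn psum pcond]] := HPES.
have Heq := Heqs i.
have [rf sy tr] := eq_facts Heq.
have [dmono dinc d0 didem] := dia_facts i HA.
have fmin' := fmin; case: fmin' => fnb ffix _.
have uniq_f : forall f', is_minQ dia sim phi pre i f' -> leQ phi pre g f' ->
    eqQ phi pre f' f.
  move=> f' f'min gf'.
  have f'min' := f'min; case: f'min' => f'nb f'fix _.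
  pose h := meetF f f'.
  have hfix : eqQ phi pre (diaQ dia sim phi pre i h) h.
    apply: fixQ => // e.
    have l1 : leF (meetF h (preb phi pre)) (meetF f (preb phi pre)).
      by move=> e'; rewrite /meetF /h /meetF lexI leIr andbT; apply: le_trans (leIl _ _) (leIl _ _).
    have l2 : leF (meetF h (preb phi pre)) (meetF f' (preb phi pre)).
      by move=> e'; rewrite /meetF /h /meetF lexI leIr andbT; apply: le_trans (leIl _ _) (leIr _ _).
    have k1 := ffix e; have k2 := f'fix e.
    move: k1 k2; rewrite /diaQ /meetF => k1 k2.
    have m1 := diaF_mono sim dmono l1 e; have m2 := diaF_mono sim dmono l2 e.
    move: m1 m2; rewrite /meetF => m1 m2.
    rewrite /h /meetF lexI leIr andbT lexI; apply/andP; split.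
      by apply: le_trans (_ : _ <= f e `&` preb phi pre e) (leIl _ _);
         rewrite -k1 lexI leIr andbT; apply: le_trans (leIl _ _) m1.
    by apply: le_trans (_ : _ <= f' e `&` preb phi pre e) (leIl _ _);
       rewrite -k2 lexI leIr andbT; apply: le_trans (leIl _ _) m2.
  have gh : leQ phi pre g h.
    move=> e; have := gf e; have := gf' e; rewrite /h /meetF => a1 a2.
    rewrite !lexI leIr !andbT; apply/andP; split.
      by move: a2; rewrite lexI => /andP [].
    by move: a1; rewrite lexI => /andP [].
  have hnb : ~ eqQ phi pre h (@botF _ L E).
    move=> hb; apply: gnz => e; apply/le_anti; apply/andP; split.
      by rewrite -(hb e); exact: gh e.
    by rewrite /meetF /botF meet0x le0x.
  have hf : leQ phi pre h f.
    by move=> e; rewrite /h /meetF lexI leIr andbT; apply: le_trans (leIl _ _) (leIl _ _).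
  have hf' : leQ phi pre h f'.
    by move=> e; rewrite /h /meetF lexI leIr andbT; apply: le_trans (leIl _ _) (leIr _ _).
  have e1 := minQ_eq fmin hf hfix hnb.
  have e2 := minQ_eq f'min hf' hfix hnb.
  by move=> e; rewrite -(e1 e) -(e2 e).
exists f; split; first by split.
have [e0 ne0] := nbotQ fnb.
set x := f e0 `&` preb phi pre e0.
have fx : dia i (dia i x) = dia i x := didem x.
have dxx : dia i x `&` x != \bot by rewrite (meet_r (dinc x)).
have [c [cm [cdx cx]]] := exists_min HA fx dxx.
pose m := cls (sim i) e0 c.
have mmin : is_minF dia sim i m := cls_min e0 HA Heq cm.
have mfix : eqF (diaF dia sim i m) m.
  by case: mmin.
have mf : eqQ phi pre m f.
  apply: (minQ_eq fmin).
  - move=> e; rewrite /meetF /m /cls; case: ifP => ee; last by rewrite meet0x le0x.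
    have k1 := ffix e; move: k1; rewrite /diaQ /meetF => <-.
    rewrite lexI leIr andbT; apply: le_trans (leIl _ _) _.
    apply: le_trans cdx _; rewrite /diaF /x.
    exact: (@joins_sup _ _ _ e0 (sim i e) (fun e' => dia i (f e' `&` preb phi pre e')) (sy _ _ ee)).
  - apply: fixQ => // e.
    rewrite lexI leIr andbT; apply: le_trans (leIl _ _) _.
    rewrite -(mfix e); apply: diaF_mono => // e'; exact: leIl.
  - move=> mb0; move: (mb0 e0); rewrite /meetF /botF /m /cls rf meet0x => cb.
    move/eqP: cx; apply; apply/eqP; rewrite -lex0 -cb lexI leIl /=.
    by apply: le_trans (leIr _ _) (leIr _ _).
have fm : leF (meetF f (preb phi pre)) m.
  by move=> e; rewrite -(mf e) /meetF leIl.
have domQ : forall h, eqQ phi pre h f -> in_domF dia sim i h ->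
    (0 < mu' mu P phi pre i h)%R.
  move=> h hf [M Mmin hM]; apply: (mu'_pos HAPE HPES).
    move=> e; have [c' cm' Mc'] := minF_dom e HA Heq Mmin.
    by exists c' => //; apply: le_trans (hM e) Mc'.
  have [e1 ne1] := nbotQ fnb; exists e1.
  by have He : h e1 `&` preb phi pre e1 = f e1 `&` preb phi pre e1 := hf e1; rewrite He.
split.
- exists (meetF g (preb phi pre)).
    by move=> e; rewrite /meetF -meetA meetxx.
  exists m => // e; apply: le_trans (fm e); exact: gf.
- exists (meetF f (preb phi pre)).
    by move=> e; rewrite /meetF -meetA meetxx.
  by exists m.
- by move=> f0 f0f Hd; apply: lt0r_neq0; apply: domQ.
move=> g1 g2 f1 f2 g1g g2g f1f f2f _ _ _ _.
rewrite (@mu'_congr _ _ _ _ _ mu P _ phi pre i g1 g2); last by move=> e; rewrite (g1g e) (g2g e).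
by rewrite (@mu'_congr _ _ _ _ _ mu P _ phi pre i f1 f2) //; move=> e; rewrite (f1f e) (f2f e).
Qed.
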